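(* Let $\mu\subsetneq\lambda$ be partitions. For every $T\in SP(\lambda,\mu)$, $\iota_{sp}(T)$ is a semistandard Young tableau on $\mathcal{A}_\infty$ which is $sp$-highest weight, and the map $\iota_{sp}$ restricted to $SP(\lambda,\mu)$ is injective.
   Context: Young diagrams in English convention (row 1 on top); $\ell(\lambda)$ is the number of nonzero parts of $\lambda$. Alphabet $\mathcal{A}_\infty=\{1<2<3<\cdots<\cdots<\bar 3<\bar 2<\bar 1\}$; entries $\bar i$ are called negative. Semistandard: rows weakly increase, columns strictly increase. The reading of a tableau reads each column top to bottom and concatenates columns from rightmost to leftmost; ''last'', ''before'', ''after'' refer to this order. Weight of $T$: $i$-th coordinate $\#\{i\}-\#\{\bar i\}$. For $n\ge1$, $\mathcal{A}_n=\{1<\dots<n<\bar n<\dots<\bar1\}$ with crystal $B_n$: $\tilde f_i(i)=i+1$, $\tilde f_i(\overline{i+1})=\bar i$ ($i<n$), $\tilde f_n(n)=\bar n$, $\tilde f_i(b)=0$ otherwise, $\tilde e_i$ the partial inverse; $\varepsilon_i,\varphi_i$ the maximal number of applications of $\tilde e_i$, resp. $\tilde f_i$, before reaching $0$; tensor rule $\tilde e_i(b_1\otimes b_2)=\tilde e_i(b_1)\otimes b_2$ if $\varphi_i(b_1)\ge\varepsilon_i(b_2)$, else $b_1\otimes\tilde e_i(b_2)$ (similarly $\tilde f_i(b_1\otimes b_2)=\tilde f_ib_1\otimes b_2$ if $\varphi_i(b_1)>\varepsilon_i(b_2)$, else $b_1\otimes\tilde f_ib_2$), iterated as $a_1\otimes\cdots\otimes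 a_N=(a_1\otimes\cdots\otimes a_{N-1})\otimes a_N$. A tableau $T$ on $\mathcal{A}_\infty$ is $sp$-highest weight if for every sufficiently large $n$ its reading $a_1\otimes\cdots\otimes a_N\in B_n^{\otimes N}$ satisfies $\tilde e_i(a_1\otimes\cdots\otimes a_N)=0$ for all $1\le i\le n$. $SP(\lambda,\mu)$ is the set of $sp$-highest weight semistandard Young tableaux of shape $\lambda$ on $\mathcal{A}_\infty$ with weight $\mu$. The map $\iota_{sp}$: given $T$, delete the last entry in the reading that is negative; then, if $\lambda_{\ell(\lambda)}>1$, slide the last row to the left as needed so that the result is a Young tableau. *)

(* Defs.v *)
(* Symplectic (type C) tableaux on the infinite alphabet
   A_oo = {1 < 2 < ... < ... < 2bar < 1bar}. *)
From HB Require Import structures.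
From mathcomp Require Import all_boot all_order all_algebra.
Set Implicit Arguments. Unset Strict Implicit. Unset Printing Implicit Defensive.
Import Order.TTheory GRing.Theory Num.Theory.

(* Letters: [Pos i] is the letter i, [Neg i] is the letter "i bar".
   Genuine letters of A_oo have index i >= 1 (see [on_Ainf]). *)
Inductive letter := Pos of nat | Neg of nat.

Definition letter_code (a : letter) : bool * nat :=
  match a with Pos i => (false, i) | Neg i => (true, i) end.
Definition letter_decode (c : bool * nat) : letter :=
  if c.1 then Neg c.2 else Pos c.2.
Lemma letter_codeK : cancel letter_code letter_decode.
Proof. by case. Qed.
HB.instance Definition _ := Equality.copy letter (can_type letter_codeK).

Definition lindex (a : letter) : nat := match a with Pos i => i | Neg i => i end.
Definition is_neg (a : letter) : bool := if a is Neg _ then true else false.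

Definition lel (a b : letter) : bool :=
  match a, b with
  | Pos i, Pos j => i <= j
  | Pos _, Neg _ => true
  | Neg _, Pos _ => false
  | Neg i, Neg j => j <= i
  end.
Definition ltl (a b : letter) : bool := lel a b && (a != b).

(* Tableaux: list of rows, row 1 first (English convention). *)
Definition tableau := seq (seq letter).
Definition shape (T : tableau) : seq nat := map size T.
Definition entry (T : tableau) (c : nat * nat) : letter :=
  nth (Pos 0) (nth [::] T c.1) c.2.

Definition is_partition (s : seq nat) : bool := sorted geq s && all (leq 1) s.

Definition rows_weak (T : tableau) : bool := all (sorted lel) T.
Definition cols_strict (T : tableau) : bool :=
  all (fun r => all (fun j => ltl (entry T (r, j)) (entry T (r.+1, j)))
                    (iota 0 (size (nth [::] T r.+1))))
      (iota 0 (size T)).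
Definition ssyt (T : tableau) : bool :=
  [&& is_partition (shape T), rows_weak T & cols_strict T].
Definition on_Ainf (T : tableau) : bool := all (fun a => 0 < lindex a) (flatten T).

Definition reading_cells (T : tableau) : seq (nat * nat) :=
  flatten [seq [seq (r, j) | r <- iota 0 (size T) & j < size (nth [::] T r)]
          | j <- rev (iota 0 (size (head [::] T)))].
Definition reading (T : tableau) : seq letter := map (entry T) (reading_cells T).

Definition wt (T : tableau) (i : nat) : int :=
  (Posz (count_mem (Pos i) (flatten T)) - Posz (count_mem (Neg i) (flatten T)))%R.
Definition has_weight (T : tableau) (mu : seq nat) : Prop :=
  forall i, 0 < i -> wt T i = Posz (nth 0 mu i.-1).

Definition f_l (i n : nat) (a : letter) : option letter :=
  if i < n then
    match a with
    | Pos j => if j == i then Some (Pos i.+1) else None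
    | Neg j => if j == i.+1 then Some (Neg i) else None
    end
  else if i == n then
    match a with Pos j => if j == n then Some (Neg n) else None | Neg _ => None end
  else None.
Definition e_l (i n : nat) (a : letter) : option letter :=
  if i < n then
    match a with
    | Pos j => if j == i.+1 then Some (Pos i) else None
    | Neg j => if j == i then Some (Neg i.+1) else None
    end
  else if i == n then
    match a with Neg j => if j == n then Some (Pos n) else None | Pos _ => None end
  else None.

Fixpoint napp (A : Type) (f : A -> option A) (k : nat) (x : A) : nat :=
  if k is k'.+1 then
    (if f x is Some y then (napp f k' y).+1 else 0)
  else 0.

(* epsilon_i of a single letter (it is at most 1) *)
Definition eps_l (i n : nat) (a : letter) : nat := napp (e_l i n) 2 a.

(* f_i on words a_1 (x) ... (x) a_N = (a_1 (x) ... (x) a_{N-1}) (x) a_N, by the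
   tensor rule; [fuel] is a recursion bound (called with the word length).
   phi_i of the prefix w' is the maximal number of applications of f_i on w',
   computed with bound size w' (phi_i of a word never exceeds its length). *)
Fixpoint ftil (i n fuel : nat) (w : seq letter) : option (seq letter) :=
  if fuel is fuel'.+1 then
    match rev w with
    | [::] => None
    | a :: rw' =>
      let w' := rev rw' in
      if eps_l i n a < napp (ftil i n fuel') (size w') w' then
        omap (fun v => rcons v a) (ftil i n fuel' w')
      else omap (fun b => rcons w' b) (f_l i n a)
    end
  else None.

Definition f_word (i n : nat) (w : seq letter) : option (seq letter) :=
  ftil i n (size w) w.
Definition phi_word (i n : nat) (w : seq letter) : nat :=
  napp (f_word i n) (size w) w.

Fixpoint etil_rev (i n : nat) (rw : seq letter) : option (seq letter) :=
  match rw with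
  | [::] => None
  | a :: rw' =>
    if eps_l i n a <= phi_word i n (rev rw') then
      omap (fun v => a :: v) (etil_rev i n rw')
    else omap (fun b => b :: rw') (e_l i n a)
  end.
Definition e_word (i n : nat) (w : seq letter) : option (seq letter) :=
  omap (@rev letter) (etil_rev i n (rev w)).

Definition sp_hw (T : tableau) : Prop :=
  exists N, forall n, N <= n -> forall i, 1 <= i <= n ->
    e_word i n (reading T) = None.

Definition inSP (lam mu : seq nat) (T : tableau) : Prop :=
  [/\ ssyt T, on_Ainf T, shape T = lam, sp_hw T & has_weight T mu].

Definition rem_at (A : Type) (j : nat) (s : seq A) : seq A := take j s ++ drop j.+1 s.

Definition delete_cell (T : tableau) (c : nat * nat) : tableau :=
  filter (fun row => size row != 0)
         (set_nth [::] T c.1 (rem_at c.2 (nth [::] T c.1))).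

Definition iota_sp (T : tableau) : tableau :=
  match [seq c <- reading_cells T | is_neg (entry T c)] with
  | [::] => T
  | c :: cs => delete_cell T (last c cs)
  end.

(* Main.v *)
Require Import Defs.
From mathcomp Require Import all_boot all_order all_algebra.
From mathcomp Require Import zify.
Set Implicit Arguments. Unset Strict Implicit. Unset Printing Implicit Defensive.

Lemma eqPP i j : (Pos i == Pos j) = (i == j).
Proof. by apply/eqP/eqP => [[]|->]. Qed.
Lemma eqNN i j : (Neg i == Neg j) = (i == j).
Proof. by apply/eqP/eqP => [[]|->]. Qed.
Lemma eqPN i j : (Pos i == Neg j) = false.
Proof. by apply/eqP. Qed.
Lemma eqNP i j : (Neg i == Pos j) = false.
Proof. by apply/eqP. Qed.
Definition leqE := (eqPP, eqNN, eqPN, eqNP).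

Definition plusl (i : nat) (a : letter) : bool := (a == Pos i) || (a == Neg i.+1).
Definition minusl (i : nat) (a : letter) : bool := (a == Pos i.+1) || (a == Neg i).
Definition latt i (w : seq letter) :=
  forall k, count (minusl i) (take k w) <= count (plusl i) (take k w).
Definition stepR i (p : nat) (a : letter) : nat :=
  if minusl i a then p.-1 else p + plusl i a.
Definition phiR i (w : seq letter) : nat := foldl (stepR i) 0 w.

Lemma pm_excl i a : plusl i a -> minusl i a = false.
Proof.
case: a => j; rewrite /plusl /minusl !leqE ?orbF /= => /eqP ->;
  apply/negbTE; apply/eqP; lia.
Qed.

Lemma neqS i : (i == i.+1) = false.
Proof. by apply/eqP; lia. Qed.
Lemma neqS' i : (i.+1 == i) = false.
Proof. by apply/eqP; lia. Qed.

Lemma pm_excl' i a : minusl i a -> plusl i a = false.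
Proof. by move=> M; apply/negbTE/negP => P; rewrite (pm_excl P) in M. Qed.

Lemma eps_lE i n a : i < n -> eps_l i n a = minusl i a.
Proof.
move=> lin; rewrite /eps_l /napp /e_l lin /minusl.
by case: a => j; rewrite !leqE /= ?orbF; case: ifP => // _; rewrite ?neqS ?neqS'.
Qed.

Lemma f_lP i n a : i < n -> plusl i a -> exists2 b, f_l i n a = Some b & minusl i b.
Proof.
move=> lin; rewrite /f_l lin /plusl /minusl; case: a => j; rewrite !leqE ?orbF /= => /eqP ->;
  rewrite eqxx.
- by exists (Pos i.+1); rewrite // eqxx.
- by exists (Neg i); rewrite // eqxx orbT.
Qed.

Lemma f_lN i n a : i < n -> ~~ plusl i a -> f_l i n a = None.
Proof.
move=> lin; rewrite /f_l lin /plusl; case: a => j; rewrite !leqE ?orbF /=;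
  by move=> /negbTE ->.
Qed.

Lemma e_lS i n a : i < n -> minusl i a -> exists b, e_l i n a = Some b.
Proof.
move=> lin; rewrite /e_l lin /minusl; case: a => j; rewrite !leqE ?orbF /= => /eqP ->;
  rewrite eqxx; eexists; reflexivity.
Qed.

Lemma napp_min (A : Type) (f : A -> option A) (phi : A -> nat) (Q : A -> Prop) :
  (forall x, Q x -> if phi x is p.+1 then exists y, [/\ f x = Some y, phi y = p & Q y]
                    else f x = None) ->
  forall k x, Q x -> napp f k x = minn k (phi x).
Proof.
move=> H; elim=> [|k IH] x Qx /=; first by rewrite min0n.
move: (H x Qx); case: (phi x) => [->|p [y [-> py Qy]]]; first by rewrite minn0.
by rewrite IH // py minnSS.
Qed.

Lemma phiR_rcons i w a : phiR i (rcons w a) = stepR i (phiR i w) a.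
Proof. by rewrite /phiR foldl_rcons. Qed.

Lemma phiR_size i w : phiR i w <= size w.
Proof.
elim/last_ind: w => [|w a IH] //; rewrite phiR_rcons size_rcons /stepR.
case: (minusl i a) => /=; first lia.
case: (plusl i a) => /=; lia.
Qed.

Lemma ftil_spec i n : i < n -> forall fuel w, size w <= fuel ->
  if phiR i w is p.+1 then exists w2, [/\ ftil i n fuel w = Some w2, phiR i w2 = p
                                          & size w2 <= fuel]
  else ftil i n fuel w = None.
Proof.
move=> lin; elim=> [|fuel IH] w.
  by rewrite leqn0 => /nilP ->.
case/lastP: w => [|w a]; first by [].
rewrite size_rcons ltnS => sw.
have -> : ftil i n fuel.+1 (rcons w a) =
  if eps_l i n a < napp (ftil i n fuel) (size w) w then
        omap (fun v => rcons v a) (ftil i n fuel w)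
      else omap (fun b => rcons w b) (f_l i n a).
  by rewrite /= rev_rcons revK.
have -> : napp (ftil i n fuel) (size w) w = phiR i w.
  rewrite (@napp_min _ _ (phiR i) (fun v => size v <= fuel)) //.
    by apply/minn_idPr/phiR_size.
rewrite eps_lE // phiR_rcons /stepR.
case: ltnP => h.
  move: (IH w sw); case E: (phiR i w) h => [|p] h //= [w2 [-> e2 s2]] /=.
  have -> : (if minusl i a then p.+1.-1 else p.+1 + plusl i a) =
            (if minusl i a then p.-1 else p + plusl i a).+1.
    move: h; case: (minusl i a) => /= h; last by rewrite addSn.
    by case: p {E e2} h.
  exists (rcons w2 a); split => //.
    by rewrite phiR_rcons e2.
  by rewrite size_rcons.
case P: (plusl i a).
  have M := pm_excl P; rewrite M in h *.
  have -> : phiR i w = 0 by lia.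
  have [b -> mb] := f_lP lin P.
  rewrite /=; exists (rcons w b); split => //.
    by rewrite phiR_rcons /stepR mb; case: (phiR i w) h.
  by rewrite size_rcons.
rewrite f_lN ?P //= addn0.
case: (minusl i a) h => /= h; first by case: (phiR i w) h => [|[]].
by case: (phiR i w) h.
Qed.

Lemma phi_wordE i n w : i < n -> phi_word i n w = phiR i w.
Proof.
move=> lin; rewrite /phi_word /f_word.
rewrite (@napp_min _ _ (phiR i) (fun v => True)) //.
  by apply/minn_idPr/phiR_size.
move=> x _; move: (ftil_spec lin (leqnn (size x))).
by case: (phiR i x) => // p [y [? ? ?]]; exists y.
Qed.

Lemma e_word_rcons i n w a :
  e_word i n (rcons w a) =
  if eps_l i n a <= phi_word i n w then omap (rcons^~ a) (e_word i n w)
  else omap (rcons w) (e_l i n a).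
Proof.
rewrite /e_word rev_rcons /= revK.
case: ifP => _; first by case: (etil_rev i n (rev w)) => //= v; rewrite rev_cons.
by case: (e_l i n a) => //= b; rewrite rev_cons revK.
Qed.

Lemma e_word_nil i n : e_word i n [::] = None.
Proof. by []. Qed.

Lemma take_rcons_le k (w : seq letter) a :
  take k (rcons w a) = if k <= size w then take k w else rcons w a.
Proof.
rewrite -cats1 take_cat; case: ltngtP => h.
- by [].
- by rewrite take_oversize // subn_gt0.
- by rewrite h subnn take0 cats0 take_size.
Qed.

Lemma latt_rcons i w a :
  latt i (rcons w a) <->
  latt i w /\ count (minusl i) (rcons w a) <= count (plusl i) (rcons w a).
Proof.
split.
- move=> H; split; last by move: (H (size (rcons w a))); rewrite take_size.
  move=> k; case: (leqP k (size w)) => hk.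
    by move: (H k); rewrite take_rcons_le hk.
  by move: (H (size w)); rewrite take_rcons_le leqnn (take_oversize (ltnW hk)) take_size.
- move=> [H1 H2] k; rewrite take_rcons_le; case: ifP => _ //.
Qed.

Lemma count_rcons (p : pred letter) w a : count p (rcons w a) = count p w + p a.
Proof. by rewrite -cats1 count_cat /= addn0. Qed.

Lemma latt_count i w : latt i w -> count (minusl i) w <= count (plusl i) w.
Proof. by move=> /(_ (size w)); rewrite take_size. Qed.

Lemma latt_phiR i w : latt i w -> phiR i w = count (plusl i) w - count (minusl i) w.
Proof.
elim/last_ind: w => [|w a IH] //.
move=> /latt_rcons [L1 L2]; rewrite phiR_rcons (IH L1) /stepR.
move: L2 (latt_count L1); rewrite !count_rcons.
case P: (plusl i a); first rewrite (pm_excl P).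
  by rewrite /=; lia.
by case: (minusl i a) => /=; lia.
Qed.

Lemma e_word_latt i n w : i < n -> e_word i n w = None <-> latt i w.
Proof.
move=> lin; elim/last_ind: w => [|w a IH].
  by split => // _ k; rewrite take_nil.
rewrite e_word_rcons eps_lE // phi_wordE //.
case: ifP => h.
- case E: (e_word i n w) => [v|] /=.
    split => // /latt_rcons [L _]; by move: (proj2 IH L); rewrite E.
  have L := proj1 IH E; split => // _; apply/latt_rcons; split => //.
  move: h (latt_count L); rewrite (latt_phiR L) !count_rcons.
  case P: (plusl i a); first rewrite (pm_excl P).
    by rewrite /=; lia.
  by case: (minusl i a) => /=; lia.
- case M: (minusl i a) h; last by case: (phiR i w).
  move=> h; have [b ->] := e_lS lin M; split => // /latt_rcons [L1 L2].
  move: h L2 (latt_count L1); rewrite (latt_phiR L1) !count_rcons M (pm_excl' M).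
  lia.
Qed.

Lemma e_word_eps0 i n w : (forall a, a \in w -> eps_l i n a = 0) -> e_word i n w = None.
Proof.
elim/last_ind: w => [|w a IH] // H.
rewrite e_word_rcons H ?mem_rcons ?mem_head // leq0n IH //.
by move=> b bw; apply: H; rewrite mem_rcons in_cons bw orbT.
Qed.

Definition maxi (w : seq letter) : nat := foldr maxn 0 (map lindex w).

Lemma maxiP a w : a \in w -> lindex a <= maxi w.
Proof.
elim: w => [|b w IH] //=; rewrite in_cons => /orP [/eqP ->|/IH h].
  by apply: leq_maxl.
by apply: leq_trans h (leq_maxr _ _).
Qed.

Lemma sp_hw_latt T : sp_hw T -> forall i, 0 < i -> latt i (reading T).
Proof.
move=> [N HN] i i0; apply/(@e_word_latt i (maxn N i.+1)); first by rewrite leq_maxr.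
apply: HN; first by apply: leq_maxl.
by rewrite i0 /= (leq_trans (leqnSn i)) // leq_maxr.
Qed.

Lemma latt_sp_hw T : (forall i, 0 < i -> latt i (reading T)) -> sp_hw T.
Proof.
move=> H; exists (maxi (reading T)).+1 => n hn i /andP [i0 iln].
case: (ltnP i n) => h.
  by apply/(e_word_latt _ h)/H.
have -> : i = n by apply/eqP; rewrite eqn_leq iln h.
apply: e_word_eps0 => a /maxiP ha.
rewrite /eps_l /napp /e_l ltnn eqxx.
case: a ha => j //= ha.
by have -> : (j == n) = false by apply/eqP; lia.
Qed.

Lemma lel_refl : reflexive lel.
Proof. by case=> j /=. Qed.
Lemma lel_trans : transitive lel.
Proof. case=> [a|a] [b|b] [c|c] //=; lia. Qed.
Lemma lel_anti : antisymmetric lel.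
Proof. case=> [a|a] [b|b] //= /andP [h1 h2]; f_equal; lia. Qed.
Lemma lel_total a b : lel a b || lel b a.
Proof. case: a b => [a|a] [b|b] //=; lia. Qed.
Lemma ltlW a b : ltl a b -> lel a b.
Proof. by case/andP. Qed.
Lemma ltl_lel_trans a b c : ltl a b -> lel b c -> ltl a c.
Proof.
move=> /andP [ab nab] bc; rewrite /ltl (lel_trans ab bc) /=.
apply/negP => /eqP e; subst c; case/negP: nab; apply/eqP/lel_anti; by rewrite ab bc.
Qed.
Lemma lel_ltl_trans a b c : lel a b -> ltl b c -> ltl a c.
Proof.
move=> ab /andP [bc nbc]; rewrite /ltl (lel_trans ab bc) /=.
apply/negP => /eqP e; subst c; case/negP: nbc; apply/eqP/lel_anti; by rewrite ab bc.
Qed.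
Lemma neg_lel a b : is_neg a -> lel a b -> is_neg b.
Proof. by case: a b => [a|a] [b|b]. Qed.
Lemma lel_PP p q : lel (Pos p) (Pos q) = (p <= q).
Proof. by []. Qed.
Lemma ltl_PP p q : ltl (Pos p) (Pos q) = (p < q).
Proof. by rewrite /ltl /= leqE ltn_neqAle andbC. Qed.

Lemma iota_split a n : a < n -> iota 0 n = iota 0 a ++ a :: iota a.+1 (n - a.+1).
Proof.
move=> h; have e : n = a + (n - a.+1).+1 by lia.
by rewrite {1}e iotaD add0n.
Qed.

Lemma flatten_nil (A : eqType) (B : Type) (f : A -> seq B) (s : seq A) :
  (forall x, x \in s -> f x = [::]) -> flatten (map f s) = [::].
Proof. by elim: s => //= x s IH H; rewrite H ?mem_head // IH // => y ys; apply: H; rewrite in_cons ys orbT. Qed.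

Section Tab.
Variable R : nat -> seq letter.
Definition E r j := nth (Pos 0) (R r) j.
Definition colW N j := [seq E r j | r <- iota 0 N & j < size (R r)].
Definition readW N M := flatten [seq colW N j | j <- rev (iota 0 M)].
Definition partR := forall r r', r <= r' -> size (R r') <= size (R r).

Lemma readW_split N M j : j < M ->
  readW N M = flatten [seq colW N j' | j' <- rev (iota j.+1 (M - j.+1))] ++
              colW N j ++ flatten [seq colW N j' | j' <- rev (iota 0 j)].
Proof.
move=> jM; rewrite /readW.
have -> : iota 0 M = iota 0 j ++ j :: iota j.+1 (M - j.+1).
  exact: iota_split.
by rewrite rev_cat rev_cons -cats1 !map_cat !flatten_cat /= cats0 catA.
Qed.

Lemma colW_split N j r : partR -> r < N -> j < size (R r) ->
  colW N j = [seq E r' j | r' <- iota 0 r] ++ E r j ::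
             [seq E r' j | r' <- iota r.+1 (N - r.+1) & j < size (R r')].
Proof.
move=> pR rN jr; rewrite /colW.
have -> : iota 0 N = iota 0 r ++ r :: iota r.+1 (N - r.+1).
  exact: iota_split.
rewrite filter_cat /= jr map_cat /=; congr (_ ++ _).
congr map; apply/all_filterP/allP => r'; rewrite mem_iota add0n => /andP [_ h].
by apply: leq_trans jr (pR _ _ (ltnW h)).
Qed.

Lemma mem_colW N j x : x \in colW N j -> exists r, [/\ r < N, j < size (R r) & x = E r j].
Proof.
by move=> /mapP [r]; rewrite mem_filter mem_iota add0n => /andP [h1 /andP [_ h2]] ->; exists r.
Qed.

Lemma mem_flatten_cols N js x : x \in flatten [seq colW N j | j <- js] ->
  exists r j, [/\ j \in js, r < N, j < size (R r) & x = E r j].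
Proof.
move=> /flattenP [c /mapP [j jin ->]] /mem_colW [r [h1 h2 h3]]; by exists r, j.
Qed.

Lemma colW_N N N' j : (forall r, N <= r -> R r = [::]) -> N <= N' -> colW N' j = colW N j.
Proof.
move=> HR NN; rewrite /colW -(subnKC NN) iotaD filter_cat add0n.
rewrite (_ : filter _ (iota N _) = [::]) ?cats0 //.
apply/eqP; rewrite -(negbK (_ == _)) -has_filter; apply/hasPn => r.
by rewrite mem_iota => /andP [h _]; rewrite HR.
Qed.

Lemma colW_nil N j : (forall r, size (R r) <= j) -> colW N j = [::].
Proof.
move=> H; rewrite /colW (_ : filter _ _ = [::]) //.
apply/eqP; rewrite -(negbK (_ == _)) -has_filter; apply/hasPn => r _.
by rewrite -leqNgt.
Qed.

Lemma readW_M N m M : (forall r, size (R r) <= m) -> m <= M -> readW N M = readW N m.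
Proof.
move=> H mM; rewrite /readW -(subnKC mM) iotaD rev_cat map_cat flatten_cat add0n.
rewrite flatten_nil //= => j; rewrite mem_rev mem_iota => /andP [h _].
by apply: colW_nil => r; apply: leq_trans (H r) h.
Qed.

Lemma readW_N N N' M : (forall r, N <= r -> R r = [::]) -> N <= N' -> readW N' M = readW N M.
Proof.
by move=> HR NN; rewrite /readW; congr flatten; apply: eq_map => j; apply: colW_N.
Qed.

End Tab.

Lemma reading_eq T : reading T = readW (nth [::] T) (size T) (size (head [::] T)).
Proof.
rewrite /reading /reading_cells map_flatten -map_comp /readW; congr flatten.
by apply: eq_map => j /=; rewrite /colW -map_comp.
Qed.

Section SSYT.
Variable T : tableau.
Hypothesis sT : ssyt T.
Local Notation R := (nth [::] T).
Local Notation E := (E (nth [::] T)).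

Lemma geq_trans : transitive geq.
Proof. by move=> a b c /= h1 h2; apply: leq_trans h2 h1. Qed.

Lemma partT : partR R.
Proof.
move=> r r' rr'; case/and3P: sT => /andP [so _] _ _.
case: (ltnP r' (size T)) => h; last by rewrite nth_default.
have := sorted_leq_nth geq_trans (fun x => leqnn x) 0 so.
move=> /(_ r r'); rewrite !inE !size_map !(nth_map [::]) //; last by apply: leq_ltn_trans h.
by move=> /(_ (leq_ltn_trans rr' h) h rr').
Qed.

Lemma rowpos r : r < size T -> 0 < size (R r).
Proof.
case/and3P: sT => /andP [_ /allP al] _ _ h.
by have := al (size (R r)); rewrite -(nth_map [::] 0) // mem_nth ?size_map // => /(_ isT).
Qed.

Lemma rowmono r j j' : j <= j' -> j' < size (R r) -> lel (E r j) (E r j').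
Proof.
move=> jj' h; case/and3P: sT => _ /allP rw _.
have rT : r < size T by case: (ltnP r (size T)) h => // hh; rewrite nth_default.
have := sorted_leq_nth lel_trans lel_refl (Pos 0) (rw _ (mem_nth [::] rT)).
by move=> /(_ j j'); rewrite !inE; apply => //; apply: leq_ltn_trans h.
Qed.

Lemma colstrict r j : j < size (R r.+1) -> ltl (E r j) (E r.+1 j).
Proof.
move=> h; case/and3P: sT => _ _ /allP cs.
have rT : r.+1 < size T by case: (ltnP r.+1 (size T)) h => // hh; rewrite nth_default.
have := cs r; rewrite mem_iota add0n (ltnW rT) => /(_ isT) /allP /(_ j).
by rewrite mem_iota add0n h => /(_ isT).
Qed.

Lemma colstrict' r r' j : r < r' -> j < size (R r') -> ltl (E r j) (E r' j).
Proof.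
move=> rr'; elim: r' rr' => [|r' IH] //; rewrite ltnS leq_eqVlt => /orP [/eqP <-|h] hj.
  exact: colstrict.
apply: ltl_lel_trans (IH h _) (ltlW (colstrict hj)).
by apply: leq_trans hj (partT (leqnSn _)).
Qed.

Lemma colmono r r' j : r <= r' -> j < size (R r') -> lel (E r j) (E r' j).
Proof.
rewrite leq_eqVlt => /orP [/eqP <-|h] hj; first exact: lel_refl.
exact/ltlW/colstrict'.
Qed.

Lemma cell_row r j : j < size (R r) -> r < size T.
Proof. by case: (ltnP r (size T)) => // hh; rewrite nth_default. Qed.

Lemma mem_cell r j : j < size (R r) -> E r j \in flatten T.
Proof.
move=> h; apply/flattenP; exists (R r); last exact: mem_nth.
exact/mem_nth/(cell_row h).
Qed.

Lemma rows_le_head r : size (R r) <= size (head [::] T).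
Proof. by rewrite -nth0; apply: partT. Qed.

Lemma reading_eqN N M : size T <= N -> size (head [::] T) <= M -> reading T = readW R N M.
Proof.
move=> hN hM; rewrite reading_eq -(@readW_M R (size T) (size (head [::] T)) M rows_le_head hM).
by rewrite (@readW_N R (size T) N M) // => r h; rewrite nth_default.
Qed.

End SSYT.

Lemma latt_catl i s1 s2 : latt i (s1 ++ s2) -> latt i s1.
Proof.
move=> H k; case: (leqP k (size s1)) => h.
  move: (H k); rewrite take_cat; case: ltngtP h => // e _.
  by rewrite e subnn take0 cats0 take_size.
by rewrite (take_oversize (ltnW h)); move: (H (size s1)); rewrite take_cat ltnn subnn take0 cats0.
Qed.

Lemma count_orF (P Q : pred letter) s : (forall x, x \in s -> ~~ P x) ->
  count (fun x => P x || Q x) s = count Q s.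
Proof. by move=> H; apply: eq_in_count => x /H /negbTE ->. Qed.

Lemma POS T : ssyt T -> on_Ainf T -> (forall i, 0 < i -> latt i (reading T)) ->
  forall r j, j < size (nth [::] T r) -> ~~ is_neg (E (nth [::] T) r j) ->
  E (nth [::] T) r j = Pos r.+1.
Proof.
move=> sT aT lT.
set R := nth [::] T.
set m := size (head [::] T).
have Rm r : size (R r) <= m by apply: rows_le_head.
have ainf r j : j < size (R r) -> 0 < lindex (E R r j).
  by move=> h; move/allP: aT; apply; apply: mem_cell.
suff main : forall d j, m - j <= d -> forall r, j < size (R r) -> ~~ is_neg (E R r j) ->
                E R r j = Pos r.+1.
  by move=> r j h; apply: (main (m - j) j (leqnn _)).
elim=> [|d IHd] j hd.
  by move=> r h; have := Rm r; lia.
elim/ltn_ind => r IHr hj hn.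
have IHc : forall j' r', j < j' -> j' < size (R r') -> ~~ is_neg (E R r' j') ->
              E R r' j' = Pos r'.+1.
  move=> j' r' jj' h'; apply: (IHd j') => //; have := Rm r'; lia.
case Erj: (E R r j) hn => [p|p] // _.
have lb : r < p.
  case: r IHr hj Erj => [|r] IHr hj Erj.
    by have := ainf 0 j hj; rewrite Erj.
  have hj' : j < size (R r) by apply: leq_trans hj (partT sT (leqnSn r)).
  have := colstrict sT hj; rewrite -/R Erj => lt.
  have nn : ~~ is_neg (E R r j) by case: (E R r j) lt.
  by move: lt; rewrite (IHr r (ltnSn r) hj' nn) ltl_PP.
congr Pos; apply/eqP; rewrite eqn_leq lb andbT; apply/negPn/negP; rewrite -ltnNge => big.
have rT : r < size T := cell_row hj.
have jm : j < m by apply: leq_trans hj (Rm r).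
set Fg := flatten [seq colW R (size T) j' | j' <- rev (iota j.+1 (m - j.+1))].
set top := [seq E R r' j | r' <- iota 0 r].
set rest := [seq E R r' j | r' <- iota r.+1 (size T - r.+1) & j < size (R r')] ++
            flatten [seq colW R (size T) j' | j' <- rev (iota 0 j)].
have rd : reading T = rcons (Fg ++ top) (Pos p) ++ rest.
  rewrite (reading_eqN sT (leqnn _) (leqnn _)) (readW_split _ _ jm).
  rewrite (colW_split (partT sT) rT hj) Erj.
  by rewrite -cats1 -!catA.
set Q := Fg ++ top.
have LQ i : 0 < i -> latt i (rcons Q (Pos p)).
  by move=> i0; have := lT i i0; rewrite rd; apply: latt_catl.
have noBig x q : x \in Q -> p.-1 <= q -> x != Pos q.
  rewrite mem_cat => /orP [/mem_flatten_cols [r' [j' [jin r'N hj'' ->]]]|].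
  - move: jin; rewrite mem_rev mem_iota => /andP [jj' _] hq.
    apply/negP => /eqP e.
    have e' := IHc j' r' jj' hj''; rewrite e in e'; have {}e' := e' isT; case: e' => e'.
    have rr' : r <= r' by lia.
    have hjr : j' < size (R r) by apply: leq_trans hj'' (partT sT rr').
    have l1 := rowmono sT (ltnW jj') hjr; rewrite -/R Erj in l1.
    have l2 := colmono sT rr' hj''; rewrite -/R e in l2.
    have nn : ~~ is_neg (E R r j') by case: (E R r j') l2.
    by move: l1; rewrite (IHc j' r jj' hjr nn) lel_PP; lia.
  - move=> /mapP [r' r'in ->] hq; move: r'in; rewrite mem_iota add0n => /andP [_ r'r].
    have hjr : j < size (R r') by apply: leq_trans hj (partT sT (ltnW r'r)).
    have l2 := colmono sT (ltnW r'r) hj; rewrite -/R Erj in l2.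
    have nn : ~~ is_neg (E R r' j) by case: (E R r' j) l2.
    by rewrite (IHr r' r'r hjr nn) leqE; apply/eqP; lia.
have cnt i : p <= i -> count (minusl i) Q = count (pred1 (Neg i)) Q /\
                       count (plusl i) Q = count (pred1 (Neg i.+1)) Q.
  move=> pi; split; apply: count_orF => x xQ; apply: noBig => //; lia.
have chain t : count (pred1 (Neg p)) Q <= count (pred1 (Neg (p + t))) Q.
  elim: t => [|t IH]; first by rewrite addn0.
  have [c1 c2] := cnt (p + t) (leq_addr _ _).
  have := latt_count (proj1 (proj1 (latt_rcons _ _ _) (LQ (p + t) ltac:(lia)))).
  by rewrite c1 c2 addnS; apply: leq_trans.
have z : count (pred1 (Neg (p + maxi (reading T)))) Q = 0.
  apply/eqP; rewrite -leqn0 leqNgt -has_count; apply/hasPn => x xQ; apply/eqP => e.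
  have xr : x \in reading T by rewrite rd mem_cat mem_rcons in_cons xQ orbT.
  by have := maxiP xr; rewrite e /=; lia.
have zp : count (pred1 (Neg p)) Q = 0 by have := chain (maxi (reading T)); rewrite z; lia.
have := latt_count (LQ p.-1 ltac:(lia)).
rewrite !count_rcons.
have -> : minusl p.-1 (Pos p) by rewrite /minusl leqE prednK ?eqxx //; lia.
have -> : plusl p.-1 (Pos p) = false by rewrite /plusl !leqE orbF; apply/eqP; lia.
have cp : count (plusl p.-1) Q = 0.
  rewrite /plusl count_orF; first by rewrite prednK ?zp //; lia.
  by move=> x xQ; apply: noBig.
by rewrite cp; lia.
Qed.

Lemma split_filter_iota (A : Type) (f : nat -> A) (P : pred nat) N r :
  r < N -> P r -> (forall r', r' < r -> P r') ->
  [seq f x | x <- iota 0 N & P x] =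
  [seq f x | x <- iota 0 r] ++ f r :: [seq f x | x <- iota r.+1 (N - r.+1) & P x].
Proof.
move=> rN Pr H; rewrite (iota_split rN) filter_cat /= Pr map_cat /=; congr (_ ++ _).
congr map; apply/all_filterP/allP => r'; rewrite mem_iota add0n => /andP [_ h].
exact: H.
Qed.

Lemma last_split (A : eqType) (x c : A) s l l' : x :: s = l ++ c :: l' -> last x s = last c l'.
Proof.
case: l => [|a l] /= [-> ->] //.
by rewrite last_cat /=.
Qed.

Definition colC (R : nat -> seq letter) N j := [seq (r, j) | r <- iota 0 N & j < size (R r)].

Lemma reading_cells_eq T : reading_cells T =
  flatten [seq colC (nth [::] T) (size T) j | j <- rev (iota 0 (size (head [::] T)))].
Proof. by []. Qed.

Section LastNeg.
Variable T : tableau.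
Hypothesis sT : ssyt T.
Local Notation R := (nth [::] T).
Local Notation E := (E (nth [::] T)).

Lemma last_neg c0 cs : [seq c <- reading_cells T | is_neg (entry T c)] = c0 :: cs ->
  let: (r0, j0) := last c0 cs in
  [/\ j0 < size (R r0), is_neg (E r0 j0), (forall r, r0 < r -> size (R r) <= j0)
    & (forall r j, j < j0 -> j < size (R r) -> ~~ is_neg (E r j))].
Proof.
move=> Hf.
have cin : last c0 cs \in c0 :: cs := mem_last c0 cs.
case Ec: (last c0 cs) cin => [r0 j0] cin.
move: (cin); rewrite -Hf mem_filter => /andP [negc].
rewrite reading_cells_eq => /flattenP [cc /mapP [j jin ->]].
move=> /mapP [r]; rewrite mem_filter mem_iota add0n => /andP [hj0 /andP [_ rN]] [e1 e2].
subst r j.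
set m := size (head [::] T).
have jm : j0 < m by move: jin; rewrite mem_rev mem_iota.
set P2 := [seq (r', j0) | r' <- iota r0.+1 (size T - r0.+1) & j0 < size (R r')] ++
          flatten [seq colC R (size T) j | j <- rev (iota 0 j0)].
have spl : reading_cells T =
    (flatten [seq colC R (size T) j | j <- rev (iota j0.+1 (m - j0.+1))] ++
     [seq (r', j0) | r' <- iota 0 r0]) ++ (r0, j0) :: P2.
  rewrite reading_cells_eq (iota_split jm) rev_cat rev_cons -cats1 !map_cat !flatten_cat /=.
  rewrite cats0 /colC (split_filter_iota (fun r => (r, j0)) rN) //=; last first.
    by move=> r' h; apply: leq_trans hj0 (partT sT (ltnW h)).
  by rewrite -!catA.
have nP2 : forall x, x \in P2 -> ~~ is_neg (entry T x).
  have := Hf; rewrite spl filter_cat /= negc => /esym /last_split; rewrite Ec.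
  case E2: (filter _ P2) => [|d ds] /=.
    by move=> _ x xP; apply/negP => nx; have : x \in [::] by rewrite -E2 mem_filter nx.
  move=> h; have : last d ds \in d :: ds := mem_last d ds.
  rewrite -h -E2 mem_filter => /andP [_].
  rewrite mem_cat => /orP [/mapP [r']|/flattenP [cc2 /mapP [j]]].
    by rewrite mem_filter mem_iota => /andP [_ /andP [h1 _]] [e]; lia.
  rewrite mem_rev mem_iota => /andP [_ hj] -> /mapP [r' _] [_ e]; lia.
have below : forall r, r0 < r -> size (R r) <= j0.
  have b1 : size (R r0.+1) <= j0.
    rewrite leqNgt; apply/negP => h.
    have : (r0.+1, j0) \in P2.
      rewrite mem_cat; apply/orP; left; apply/mapP; exists r0.+1 => //.
      rewrite mem_filter h mem_iota leqnn /=.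
      have := cell_row h; lia.
    move=> /nP2; rewrite /entry /=.
    by have := colstrict sT h; move=> /ltlW /(neg_lel negc) ->.
  by move=> r h; apply: leq_trans (partT sT h) b1.
split => //.
move=> r j jj0 hj; apply: (nP2 (r, j)).
rewrite mem_cat; apply/orP; right; apply/flattenP; exists (colC R (size T) j).
  by apply/mapP; exists j => //; rewrite mem_rev mem_iota.
apply/mapP; exists r => //; rewrite mem_filter hj mem_iota /=.
exact: cell_row hj.
Qed.

End LastNeg.

Lemma size_rem_at (A : Type) j (s : seq A) : j < size s -> size (rem_at j s) = (size s).-1.
Proof. by move=> h; rewrite /rem_at size_cat size_take size_drop h; lia. Qed.

Lemma nth_rem_at (A : Type) (x0 : A) j s k : j < size s ->
  nth x0 (rem_at j s) k = nth x0 s (if k < j then k else k.+1).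
Proof.
move=> h; rewrite /rem_at nth_cat size_take h.
case: ltnP => hk; first by rewrite nth_take.
by rewrite nth_drop; congr nth; lia.
Qed.

Lemma rem_at_subseq (A : eqType) j (s : seq A) : subseq (rem_at j s) s.
Proof.
rewrite /rem_at -{3}(cat_take_drop j s); apply: cat_subseq => //.
by rewrite -[j.+1]/(1 + j) -drop_drop drop_subseq.
Qed.

Lemma count_rem_at (A : eqType) (p : pred A) j s x0 : j < size s ->
  count p (rem_at j s) + p (nth x0 s j) = count p s.
Proof.
move=> h; rewrite -{3}(cat_take_drop j s) (drop_nth x0 h) /rem_at !count_cat /=; lia.
Qed.

Lemma flatten_cons' (A : Type) (x : seq A) s : flatten (x :: s) = x ++ flatten s.
Proof. by []. Qed.

Section Delete.
Variable T : tableau.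
Hypothesis sT : ssyt T.
Variables r0 j0 : nat.
Local Notation R := (nth [::] T).
Hypothesis hj0 : j0 < size (R r0).
Hypothesis below : forall r, r0 < r -> size (R r) <= j0.

Definition R' r := if r == r0 then rem_at j0 (R r0) else R r.
Local Notation T' := (delete_cell T (r0, j0)).

Lemma r0T : r0 < size T.
Proof. exact: cell_row hj0. Qed.

Lemma T'_nth r : nth [::] T' r = R' r.
Proof.
rewrite /delete_cell /= set_nthE r0T filter_cat /=.
have allne : forall s, (forall x, x \in s -> x \in T) -> filter (fun row => size row != 0) s = s.
  move=> s Hs; apply/all_filterP/allP => x /Hs /(nthP [::]) [k kT <-].
  by rewrite -lt0n; apply: rowpos.
rewrite (allne (take r0 T)); last by move=> x /mem_take.
rewrite (allne (drop r0.+1 T)); last by move=> x /mem_drop.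
rewrite /R'; case: ifP => hne.
  have := set_nthE T [::] r0 (rem_at j0 (R r0)); rewrite r0T => <-.
  by rewrite nth_set_nth /=; case: eqP.
have j00 : j0 = 0.
  by move/negbFE/eqP: hne; rewrite size_rem_at //; lia.
have sz1 : size T = r0.+1.
  apply/eqP; rewrite eqn_leq r0T andbT leqNgt; apply/negP => h.
  have := rowpos sT h; have := below (ltnSn r0); lia.
rewrite drop_oversize ?sz1 // cats0.
case: ltngtP => h.
- by rewrite nth_take.
- by rewrite !nth_default ?size_take ?r0T ?sz1 //; lia.
- move: hne => /negbFE; rewrite size_eq0 => /eqP ->; subst r.
  by rewrite nth_default // size_take r0T.
Qed.

Lemma T'_size : size T' <= size T.
Proof.
rewrite /delete_cell size_filter; apply: leq_trans (count_size _ _) _.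
by rewrite size_set_nth geq_max r0T leqnn.
Qed.

Lemma partR' : partR R'.
Proof.
have Lp := size_rem_at hj0.
move=> r r' rr'; rewrite /R'.
case: (eqVneq r' r0) => e'; case: (eqVneq r r0) => e //.
- subst r'; rewrite Lp; have := partT sT rr'; lia.
- subst r; rewrite Lp; have := below (_ : r0 < r'); have : r0 < r' by rewrite ltn_neqAle eq_sym e' rr'.
  move=> h /(_ h); lia.
- exact: partT.
Qed.

Lemma ssyt_T' : ssyt T'.
Proof.
have Lp := size_rem_at hj0.
have nthS : forall k, nth 0 (shape T') k = size (R' k).
  move=> k; case: (ltnP k (size T')) => h.
    by rewrite /shape (nth_map [::]) // T'_nth.
  by rewrite nth_default ?size_map // -T'_nth nth_default.
apply/and3P; split.
- apply/andP; split.
    apply/(sortedP 0) => k; rewrite size_map => h.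
    by rewrite !nthS; apply: partR'.
  apply/allP => x /mapP [row]; rewrite mem_filter => /andP [h _] ->; by rewrite lt0n.
- apply/(all_nthP [::]) => k _; rewrite T'_nth /R'.
  case/and3P: sT => _ /allP rw _.
  case: ifP => _.
    apply: (subseq_sorted lel_trans (rem_at_subseq _ _)); apply: rw; exact/mem_nth/r0T.
  case: (ltnP k (size T)) => hk; first by apply/rw/mem_nth.
  by rewrite nth_default.
- apply/allP => r _; apply/allP => j; rewrite mem_iota add0n T'_nth => /andP [_ hj].
  rewrite /entry /= !T'_nth /R' in hj *.
  case: (eqVneq r.+1 r0) => e1.
    have ne : (r == r0) = false by apply/eqP; lia.
    rewrite ne; rewrite e1 eqxx Lp in hj.
    rewrite nth_rem_at //.
    set j' := if j < j0 then j else j.+1.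
    have hj' : j' < size (R r0) by rewrite /j'; case: ifP; lia.
    have hj'r : j' < size (R r) by apply: leq_trans hj' (partT sT _); lia.
    apply: lel_ltl_trans (rowmono sT (_ : j <= j') hj'r) _; first by rewrite /j'; case: ifP.
    have := colstrict sT (_ : j' < size (R r.+1)); rewrite e1; apply; exact: hj'.
  rewrite (negbTE e1) in hj *.
  case: (eqVneq r r0) => e.
    rewrite e in hj *; have := below (ltnSn r0) => hb.
    rewrite nth_rem_at // (_ : j < j0) //; last by lia.
    exact: colstrict.
  exact: colstrict.
Qed.

Lemma mem_T' x : x \in flatten T' -> x \in flatten T.
Proof.
move=> /flattenP [row]; rewrite mem_filter set_nthE r0T => /andP [_].
rewrite mem_cat in_cons => /orP [/mem_take rT|/orP [/eqP ->|/mem_drop rT]] xr;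
  apply/flattenP.
- by exists row.
- exists (R r0); first exact/mem_nth/r0T.
  exact: (mem_subseq (rem_at_subseq j0 (R r0)) xr).
- by exists row.
Qed.

Lemma count_T' (p : pred letter) :
  count p (flatten T') + p (E R r0 j0) = count p (flatten T).
Proof.
have cf : forall s : seq (seq letter),
    count p (flatten (filter (fun row => size row != 0) s)) = count p (flatten s).
  elim=> [|a s IH] //=; case: ifP => /=; rewrite !count_cat IH //.
  by move=> /negbFE; rewrite size_eq0 => /eqP ->.
have eT : flatten T = flatten (take r0 T ++ R r0 :: drop r0.+1 T).
  by rewrite -(drop_nth [::] r0T) cat_take_drop.
rewrite /delete_cell /= cf set_nthE r0T eT.
have h : count p (take j0 (R r0)) + count p (drop j0.+1 (R r0)) + p (E R r0 j0) = count p (R r0).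
  by have := count_rem_at p (Pos 0) hj0; rewrite /rem_at count_cat.
rewrite !flatten_cat !flatten_cons' !count_cat; lia.
Qed.

End Delete.

Lemma latt_catP i a s : latt i (a ++ s) <->
  latt i a /\ forall k, count (minusl i) a + count (minusl i) (take k s) <=
                        count (plusl i) a + count (plusl i) (take k s).
Proof.
split.
- move=> H; split; first exact: latt_catl H.
  move=> k; have := H (size a + k); rewrite take_cat ltnNge leq_addr /= addKn.
  by rewrite !count_cat.
- move=> [La H] k; rewrite take_cat; case: ltnP => _; first exact: La.
  by rewrite !count_cat.
Qed.

Lemma swap_arith (ma pa my py mt pt : nat) :
  ma <= pa -> (py = 1 -> mt <= pt) -> (py = 1 -> my = 0) -> my <= 1 -> py <= 1 ->
  ma + (my + mt) <= pa + (py + pt) -> ma + mt <= pa + pt.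
Proof. case: py => [|[|]] //; lia. Qed.

Lemma swap i a y t c : latt i (a ++ y :: t ++ c) -> (plusl i y -> latt i t) ->
  latt i (a ++ t ++ y :: c).
Proof.
move/latt_catP => [La H] Ht; apply/latt_catP; split => // k.
have key : forall p, (plusl i y -> count (minusl i) p <= count (plusl i) p) ->
    count (minusl i) a + (minusl i y + count (minusl i) p) <=
    count (plusl i) a + (plusl i y + count (plusl i) p) ->
    count (minusl i) a + count (minusl i) p <= count (plusl i) a + count (plusl i) p.
  move=> p Hp; apply: swap_arith; first exact: latt_count La.
  - by case: (plusl i y) Hp => // /(_ isT).
  - by case P: (plusl i y) => //; rewrite (pm_excl P).
  - by case: (minusl i y).
  - by case: (plusl i y).
rewrite take_cat; case: ltnP => hk.
  apply: key; first by move=> /Ht /(_ k).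
  by have := H k.+1; rewrite /= take_cat hk.
case E: (k - size t) => [|k'].
  rewrite take0 cats0; apply: key; first by move=> /Ht /(_ (size t)); rewrite take_size.
  by have := H (size t).+1; rewrite /= take_cat ltnn subnn take0 cats0.
have := H k; have -> : k = (size t + k').+1 by lia.
rewrite /= take_cat ltnNge leq_addr /= addKn !count_cat /=; lia.
Qed.

Fixpoint oldw (t : nat -> seq letter) (x : nat -> letter) j0 d : seq letter :=
  if d is d'.+1 then t (j0 + d') ++ x (j0 + d') :: oldw t x j0 d' else [::].
Fixpoint shw (t : nat -> seq letter) (x : nat -> letter) j0 y d : seq letter :=
  if d is d'.+1 then t (j0 + d') ++ y :: shw t x j0 (x (j0 + d')) d' else [::].

Lemma transfer i t x j0 b : forall d a y, y = x (j0 + d) ->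
  latt i (a ++ y :: oldw t x j0 d ++ b) ->
  (forall d', d' < d -> plusl i (x (j0 + d').+1) -> latt i (t (j0 + d'))) ->
  (plusl i (x j0) -> latt i b) -> latt i (a ++ shw t x j0 y d ++ b).
Proof.
elim=> [|d IH] a y ey L Hc Hb /=.
  have := @swap i a y b [::]; rewrite cats0 => /(_ L) h.
  have : latt i ((a ++ b) ++ [:: y]) by rewrite -catA; apply: h; rewrite ey addn0.
  exact: latt_catl.
move: L; rewrite /= -catA => L.
have L2 := swap L (_ : plusl i y -> latt i (t (j0 + d))).
have : latt i ((a ++ t (j0 + d) ++ [:: y]) ++ x (j0 + d) :: oldw t x j0 d ++ b).
  by rewrite -!catA /=; apply: L2; rewrite ey addnS; apply: Hc.
move=> /IH h; have := h erefl.
by rewrite -!catA /=; apply => // d' hd'; apply: Hc; apply: ltnW.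
Qed.

Lemma latt_flatten i ws : (forall w, w \in ws -> latt i w) -> latt i (flatten ws).
Proof.
elim: ws => [|w ws IH] H /=; first by move=> k.
apply/latt_catP; split; first by apply: H; rewrite mem_head.
move=> k.
have L1 : count (minusl i) w <= count (plusl i) w := latt_count (H w (mem_head _ _)).
have L2 : count (minusl i) (take k (flatten ws)) <= count (plusl i) (take k (flatten ws)).
  by apply: IH => w' h; apply: H; rewrite in_cons h orbT.
exact: leq_add L1 L2.
Qed.

Lemma dc_le (P : pred nat) : (forall r, P r.+1 -> P r) -> forall n r, r <= n -> P n -> P r.
Proof.
move=> dc; elim=> [|n IH] r; first by rewrite leqn0 => /eqP ->.
rewrite leq_eqVlt => /orP [/eqP -> //|h] /dc; exact: IH.
Qed.

Lemma filter_iota_dc (P : pred nat) N : (forall r, P r.+1 -> P r) ->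
  exists h, filter P (iota 0 N) = iota 0 h.
Proof.
move=> dc; elim: N => [|N [h IH]]; first by exists 0.
rewrite -addn1 iotaD add0n filter_cat /=.
case PN: (P N) => /=; last by rewrite cats0; exists h.
exists N.+1; rewrite (_ : filter P (iota 0 N) = iota 0 N).
  by rewrite -addn1 iotaD.
apply/all_filterP/allP => r; rewrite mem_iota add0n => /andP [_ rN].
exact: (dc_le dc (ltnW rN) PN).
Qed.

Lemma latt_iota i (f : nat -> letter) h : 0 < i ->
  (forall r, r < h -> f r != Neg i) ->
  (forall r, r < h -> ~~ is_neg (f r) -> f r = Pos r.+1) ->
  (forall r, r.+1 < h -> ~~ is_neg (f r.+1) -> ~~ is_neg (f r)) ->
  latt i (map f (iota 0 h)).
Proof.
move=> i0 H1 H2 H3 k; rewrite -map_take take_iota !count_map.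
set k' := minn k h; have k'h : k' <= h by apply: geq_minr.
have mi : forall r, r < k' -> minusl i (f r) -> r = i.
  move=> r rk; have rh : r < h by apply: leq_trans rk k'h.
  rewrite /minusl (negbTE (H1 r rh)) orbF => /eqP e.
  by have := H2 r rh; rewrite e => /(_ isT) [].
case: (boolP (has (preim f (minusl i)) (iota 0 k'))) => [/hasP [r rin mr] | hn]; last first.
  by move: hn; rewrite has_count -leqNgt leqn0 => /eqP ->.
move: rin; rewrite mem_iota add0n => /andP [_ rk].
have ri := mi r rk mr; subst r.
have c1 : count (preim f (minusl i)) (iota 0 k') <= 1.
  rewrite (@eq_in_count _ _ (fun r => (r == i) && minusl i (f r))); last first.
    move=> r; rewrite mem_iota add0n /= => rk'.
    by case M: (minusl i (f r)); rewrite ?andbF ?andbT // (mi r rk' M) eqxx.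
  have sc : count (fun r => (r == i) && minusl i (f r)) (iota 0 k') <= count (pred1 i) (iota 0 k').
    by apply: sub_count => r /andP [].
  apply: leq_trans sc _.
  by rewrite count_uniq_mem ?iota_uniq //; case: (_ \in _).
have c2 : 0 < count (preim f (plusl i)) (iota 0 k').
  rewrite -has_count; apply/hasP; exists i.-1; first by rewrite mem_iota add0n; lia.
  have ih : i < h by apply: leq_trans rk k'h.
  have fi : f i = Pos i.+1.
    by move: mr; rewrite /= /minusl (negbTE (H1 i ih)) orbF => /eqP.
  have nn : ~~ is_neg (f i.-1) by apply: H3; rewrite prednK // fi.
  by rewrite /= (H2 _ (leq_ltn_trans (leq_pred _) ih) nn) /plusl prednK // eqxx.
lia.
Qed.

Lemma readW_ext (R1 R2 : nat -> seq letter) N M : R1 =1 R2 -> readW R1 N M = readW R2 N M.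
Proof.
move=> e; rewrite /readW /colW /E; congr flatten; apply: eq_map => j.
by rewrite (eq_filter (a2 := fun r => j < size (R2 r))) => [|r]; [apply: eq_map => r; rewrite e | rewrite e].
Qed.

Definition F (R : nat -> seq letter) N js := flatten [seq colW R N j | j <- js].

Lemma readW_split3 R N j0 L m : j0 <= L -> L <= m ->
  readW R N m = F R N (rev (iota L (m - L))) ++ F R N (rev (iota j0 (L - j0))) ++
                F R N (rev (iota 0 j0)).
Proof.
move=> h1 h2; have e : m = j0 + (L - j0) + (m - L) by lia.
rewrite /readW /F {1}e !iotaD !add0n (subnKC h1) !rev_cat !map_cat !flatten_cat.
by rewrite catA.
Qed.

Lemma rev_iotaS j0 d : rev (iota j0 d.+1) = (j0 + d) :: rev (iota j0 d).
Proof. by rewrite -addn1 iotaD rev_cat. Qed.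

Section HW.
Variable T : tableau.
Hypotheses (sT : ssyt T) (aT : on_Ainf T) (lT : forall i, 0 < i -> latt i (reading T)).
Variables r0 j0 : nat.
Local Notation R := (nth [::] T).
Hypothesis hj0 : j0 < size (R r0).
Hypothesis negc : is_neg (E R r0 j0).
Hypothesis below : forall r, r0 < r -> size (R r) <= j0.
Hypothesis leftpos : forall r j, j < j0 -> j < size (R r) -> ~~ is_neg (E R r j).

Local Notation R' := (R' T r0 j0).
Local Notation L := (size (R r0)).
Local Notation N := (size T).
Definition tt j := [seq E R r j | r <- iota 0 r0].
Definition xx j := E R r0 j.

Lemma R'r0 : R' r0 = rem_at j0 (R r0).
Proof. by rewrite /R' eqxx. Qed.
Lemma R'ne r : r != r0 -> R' r = R r.
Proof. by rewrite /R' => /negbTE ->. Qed.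
Lemma sizeR'0 : size (R' r0) = L.-1.
Proof. by rewrite R'r0 size_rem_at. Qed.

Lemma rest_nil (R0 : nat -> seq letter) j :
  (forall r, r0 < r -> size (R0 r) <= j) ->
  [seq E R0 r j | r <- iota r0.+1 (N - r0.+1) & j < size (R0 r)] = [::].
Proof.
move=> H; rewrite (_ : filter _ _ = [::]) //.
apply/eqP; rewrite -(negbK (_ == _)) -has_filter; apply/hasPn => r.
by rewrite mem_iota -leqNgt => /andP [h _]; apply: H.
Qed.

Lemma c1 j : j0 <= j -> j < L -> colW R N j = tt j ++ [:: xx j].
Proof.
move=> h1 h2; rewrite /colW (@split_filter_iota _ (fun r => E R r j) (fun r => j < size (R r)) N r0) //.
- by rewrite rest_nil // => r /below; lia.
- exact: r0T hj0.
- by move=> r' h; apply: leq_trans h2 (partT sT (ltnW h)).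
Qed.

Lemma c2 j : j0 <= j -> j.+1 < L -> colW R' N j = tt j ++ [:: xx j.+1].
Proof.
move=> h1 h2; rewrite /colW (@split_filter_iota _ (fun r => E R' r j) (fun r => j < size (R' r)) N r0) //.
- rewrite rest_nil; last by move=> r h; rewrite R'ne; [have := below h; lia | apply/eqP; lia].
  rewrite /E R'r0 nth_rem_at // ltnNge h1 /=; congr (_ ++ _).
  rewrite /tt /E; apply/eq_in_map => r; rewrite mem_iota add0n => /andP [_ h]; rewrite R'ne //; apply/eqP; lia.
- exact: r0T hj0.
- by rewrite sizeR'0; lia.
- move=> r' h; rewrite R'ne; last by apply/eqP; lia.
  by apply: leq_trans (_ : j < L) (partT sT (ltnW h)); lia.
Qed.

Lemma c3 : colW R' N L.-1 = tt L.-1.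
Proof.
rewrite /colW (iota_split (r0T hj0)) filter_cat /= sizeR'0 ltnn /=.
rewrite (_ : filter _ (iota r0.+1 _) = [::]); last first.
  apply/eqP; rewrite -(negbK (_ == _)) -has_filter; apply/hasPn => r.
  rewrite mem_iota -leqNgt => /andP [h _]; rewrite R'ne; last by apply/eqP; lia.
  have := below h; lia.
rewrite cats0 (_ : filter _ (iota 0 r0) = iota 0 r0).
  apply/eq_in_map => r; rewrite mem_iota add0n => /andP [_ h]; rewrite /E R'ne //; apply/eqP; lia.
apply/all_filterP/allP => r; rewrite mem_iota add0n => /andP [_ h].
rewrite R'ne; last by apply/eqP; lia.
by apply: leq_trans (_ : L.-1 < L) (partT sT (ltnW h)); lia.
Qed.

Lemma colW_same R1 R2 M j : (forall r, (j < size (R1 r)) = (j < size (R2 r))) ->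
  (forall r, j < size (R2 r) -> E R1 r j = E R2 r j) -> colW R1 M j = colW R2 M j.
Proof.
move=> h1 h2; rewrite /colW (eq_filter h1); apply/eq_in_map => r.
by rewrite mem_filter => /andP [h _]; apply: h2.
Qed.

Lemma c4 j : L <= j -> colW R' N j = colW R N j.
Proof.
move=> h; apply: colW_same => r; case: (eqVneq r r0) => [->|ne].
- by rewrite sizeR'0; apply/idP/idP; lia.
- by rewrite R'ne.
- by move=> h'; lia.
- by rewrite /E R'ne.
Qed.

Lemma c5 j : j < j0 -> colW R' N j = colW R N j.
Proof.
move=> h; apply: colW_same => r; case: (eqVneq r r0) => [->|ne].
- by rewrite sizeR'0; apply/idP/idP; lia.
- by rewrite R'ne.
- by move=> h'; rewrite /E R'r0 nth_rem_at // h.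
- by rewrite /E R'ne.
Qed.

Lemma oldF d : j0 + d <= L -> F R N (rev (iota j0 d)) = oldw tt xx j0 d.
Proof.
elim: d => [|d IH] // h; rewrite rev_iotaS /F /= -/(F R N _) IH; last lia.
by rewrite c1 //; [rewrite -catA | lia | lia].
Qed.

Lemma shF d : j0 + d < L -> F R' N (rev (iota j0 d)) = shw tt xx j0 (xx (j0 + d)) d.
Proof.
elim: d => [|d IH] // h; rewrite rev_iotaS /F /= -/(F R' N _) IH; last lia.
by rewrite c2; [rewrite -catA addnS | lia | lia].
Qed.

Lemma latt_B i : 0 < i -> latt i (F R N (rev (iota 0 j0))).
Proof.
move=> i0; apply: latt_flatten => w /mapP [j]; rewrite mem_rev mem_iota add0n => /andP [_ jj0] ->.
have [h eh] := @filter_iota_dc (fun r => j < size (R r)) N (fun r hr => leq_trans hr (partT sT (leqnSn r))).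
rewrite /colW eh.
have hr : forall r, r < h -> j < size (R r).
  move=> r rh; have : r \in filter (fun r => j < size (R r)) (iota 0 N) by rewrite eh mem_iota.
  by rewrite mem_filter => /andP [].
have pos r : r < h -> E R r j = Pos r.+1.
  by move=> rh; exact: (POS sT aT lT (hr r rh) (leftpos jj0 (hr r rh))).
apply: latt_iota => // r rh.
- by rewrite pos.
- by move=> _; apply: pos.
- by move=> _; apply: leftpos => //; apply: hr; lia.
Qed.

Theorem latt_T' i : 0 < i -> latt i (reading (delete_cell T (r0, j0))).
Proof.
move=> i0.
set m := size (head [::] T).
have Lm : L <= m by apply: rows_le_head.
have hm : size (head [::] (delete_cell T (r0, j0))) <= m.
  rewrite -nth0 T'_nth // /R'; case: ifP => _; last exact: rows_le_head.
  by rewrite size_rem_at //; apply: leq_trans (leq_pred _) (rows_le_head sT _).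
rewrite (reading_eqN (ssyt_T' sT hj0 below) (T'_size hj0) hm).
rewrite (readW_ext _ _ (T'_nth sT hj0 below)).
have jL : j0 <= L by apply: ltnW.
rewrite (readW_split3 _ _ jL Lm).
have W := lT i0; rewrite (reading_eqN sT (leqnn _) (leqnn _)) (readW_split3 _ _ jL Lm) in W.
have eA : F R' N (rev (iota L (m - L))) = F R N (rev (iota L (m - L))).
  rewrite /F; congr flatten; apply/eq_in_map => j; rewrite mem_rev mem_iota => /andP [h _].
  exact: c4.
have eB : F R' N (rev (iota 0 j0)) = F R N (rev (iota 0 j0)).
  rewrite /F; congr flatten; apply/eq_in_map => j; rewrite mem_rev mem_iota => /andP [_ h].
  exact: c5.
rewrite eA eB.
set d1 := L - j0 - 1.
have eD : L - j0 = d1.+1 by rewrite /d1; lia.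
have ej : j0 + d1 = L.-1 by rewrite /d1; lia.
rewrite eD in W *.
rewrite (oldF (_ : j0 + d1.+1 <= L)) /= in W; last by lia.
rewrite rev_iotaS /F /= -/(F R' N _) ej c3 (shF (_ : j0 + d1 < L)); last by lia.
rewrite ej in W.
set A := F R N (rev (iota L (m - L))) in W *.
set B := F R N (rev (iota 0 j0)) in W *.
change (latt i (A ++ (tt L.-1 ++ shw tt xx j0 (xx (j0 + d1)) d1) ++ B)).
rewrite ej.
have := @transfer i tt xx j0 B d1 (A ++ tt L.-1) (xx L.-1) ltac:(by rewrite ej).
rewrite -!catA; apply.
- by move: W; rewrite -!catA.
- move=> d' hd' P.
  set j := j0 + d' in P *.
  have jL1 : j.+1 < L by rewrite /j; lia.
  have jL2 : j < L by lia.
  have negx : is_neg (xx j.+1).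
    by apply: (neg_lel negc); apply: (rowmono sT _ jL1); rewrite /j; lia.
  have ex : xx j.+1 = Neg i.+1.
    by move: P negx; case: (xx j.+1) => k //=; rewrite /plusl !leqE /= => /eqP ->.
  rewrite /tt; apply: latt_iota => // r rr0.
  + have hjr : j < size (R r) by apply: leq_trans jL2 (partT sT (ltnW rr0)).
    have lt := colstrict' sT rr0 jL2.
    have le := rowmono sT (leqnSn j) jL1; rewrite /xx in ex; rewrite ex in le.
    apply/eqP => e; move: (ltl_lel_trans lt le); rewrite e /ltl /=.
    by rewrite ltnn.
  + have hjr : j < size (R r) by apply: leq_trans jL2 (partT sT (ltnW rr0)).
    by move=> nn; exact: (POS sT aT lT hjr nn).
  + move=> nn; apply/negP => ng.
    have hjr : j < size (R r.+1) by apply: leq_trans jL2 (partT sT (ltnW rr0)).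
    by move/negP: nn; apply; exact: (neg_lel ng (colmono sT (leqnSn r) hjr)).
- by move=> _; apply: latt_B.
Qed.

End HW.

Lemma size_nth_shape (T : tableau) r : nth 0 (Defs.shape T) r = size (nth [::] T r).
Proof.
case: (ltnP r (size T)) => h; first by rewrite (nth_map [::]).
by rewrite !nth_default ?size_map.
Qed.

Lemma perm_rem_at (s : seq letter) j x0 : j < size s -> perm_eq s (nth x0 s j :: rem_at j s).
Proof.
move=> h; rewrite {1}(_ : s = take j s ++ nth x0 s j :: drop j.+1 s).
  by rewrite /rem_at -cat1s perm_catCA.
by rewrite -(drop_nth x0 h) cat_take_drop.
Qed.

Lemma part1 lam mu T : inSP lam mu T ->
  [/\ ssyt (iota_sp T), on_Ainf (iota_sp T) & sp_hw (iota_sp T)].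
Proof.
move=> [sT aT shT hwT wT].
have lT := sp_hw_latt hwT.
rewrite /iota_sp; case Hf: [seq c <- reading_cells T | is_neg (entry T c)] => [|c0 cs].
  by split.
have := last_neg sT Hf; case: (last c0 cs) => r0 j0 [hj0 negc below leftpos].
split.
- exact (ssyt_T' sT hj0 below).
- apply/allP => x /(mem_T' hj0) xT; by move/allP: aT; apply.
- apply: latt_sp_hw => i i0; exact (latt_T' sT aT lT hj0 negc below leftpos i0).
Qed.

Lemma del_size T r0 j0 : ssyt T -> j0 < size (nth [::] T r0) ->
  (size (flatten (delete_cell T (r0, j0)))).+1 = size (flatten T).
Proof.
move=> sT hj0; have := count_T' sT hj0 predT; rewrite !count_predT /=; lia.
Qed.

Lemma part2 lam mu T1 T2 : inSP lam mu T1 -> inSP lam mu T2 -> iota_sp T1 = iota_sp T2 -> T1 = T2.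
Proof.
move=> [s1 a1 sh1 h1 w1] [s2 a2 sh2 h2 w2].
have shE : forall r, size (nth [::] T1 r) = size (nth [::] T2 r).
  by move=> r; rewrite -!size_nth_shape sh1 sh2.
have szE : size T1 = size T2.
  by have := congr1 size (etrans sh1 (esym sh2)); rewrite !size_map.
have fE : size (flatten T1) = size (flatten T2).
  by rewrite !size_flatten; exact: (congr1 sumn (etrans sh1 (esym sh2))).
rewrite /iota_sp.
case H1: [seq c <- reading_cells T1 | is_neg (entry T1 c)] => [|c1 cs1];
case H2: [seq c <- reading_cells T2 | is_neg (entry T2 c)] => [|c2 cs2] => //.
- move=> EE; have := last_neg s2 H2; case: (last c2 cs2) EE => r2 j2 EE [hj2 _ _ _].
  have := del_size s2 hj2; rewrite -EE; lia.
- move=> EE; have := last_neg s1 H1; case: (last c1 cs1) EE => r1 j1 EE [hj1 _ _ _].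
  have := del_size s1 hj1; rewrite EE; lia.
move=> EE.
have := last_neg s1 H1; have := last_neg s2 H2.
case: (last c2 cs2) EE => r2 j2; case: (last c1 cs1) => r1 j1 EE [hj2 ng2 bl2 _] [hj1 ng1 bl1 _].
set R1 := nth [::] T1 in hj1 ng1 bl1 *; set R2 := nth [::] T2 in hj2 ng2 bl2 *.
have RE : forall r, R' T1 r1 j1 r = R' T2 r2 j2 r.
  by move=> r; rewrite -(T'_nth s1 hj1 bl1) -(T'_nth s2 hj2 bl2) EE.
have er : r1 = r2.
  apply/eqP/negPn/negP => ne.
  have := congr1 size (RE r1); rewrite /R' eqxx (negbTE ne) size_rem_at //.
  rewrite /R1 /R2 -shE; move: hj1; rewrite /R1; lia.
subst r2.
have rowsE : forall r, r != r1 -> R1 r = R2 r.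
  by move=> r ne; have := RE r; rewrite /R' (negbTE ne).
have wE : rem_at j1 (R1 r1) = rem_at j2 (R2 r1) by have := RE r1; rewrite /R' eqxx.
case e1: (E R1 r1 j1) ng1 => [k1|k1] // _.
case e2: (E R2 r1 j2) ng2 => [k2|k2] // _.
have k1pos : 0 < k1 by have := allP a1 _ (mem_cell hj1); rewrite -/R1 e1.
have cP : count_mem (Pos k1) (flatten T1) = count_mem (Pos k1) (flatten T2).
  have cc1 := count_T' s1 hj1 (pred1 (Pos k1)).
  have cc2 := count_T' s2 hj2 (pred1 (Pos k1)).
  rewrite EE -/R1 e1 in cc1; rewrite -/R2 e2 in cc2.
  by move: cc1 cc2 => /= <- <-.
have cN : count_mem (Neg k1) (flatten T1) = count_mem (Neg k1) (flatten T2).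
  have := w1 k1 k1pos; have := w2 k1 k1pos; rewrite /wt cP => ew2 ew1.
  have := etrans ew1 (esym ew2); lia.
have k12 : k1 = k2.
  have cc1 := count_T' s1 hj1 (pred1 (Neg k1)); have cc2 := count_T' s2 hj2 (pred1 (Neg k1)).
  rewrite EE -/R1 e1 /= eqxx in cc1; rewrite -/R2 e2 /= in cc2.
  have : (Neg k2 == Neg k1).
    move: cc1 cc2; rewrite cN; case: (Neg k2 == Neg k1) => //=; lia.
  by rewrite leqE => /eqP.
subst k2.
have srt : forall T r, ssyt T -> r < size T -> sorted lel (nth [::] T r).
  by move=> T r /and3P [_ /allP rw _] rT; apply/rw/mem_nth.
have row : R1 r1 = R2 r1.
  apply: (sorted_eq lel_trans lel_anti).
  - exact: srt s1 (cell_row hj1).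
  - exact: srt s2 (cell_row hj2).
  apply: perm_trans (perm_rem_at (Pos 0) hj1) _.
  rewrite -/(E R1 r1 j1) e1 wE -e2.
  by rewrite perm_sym; apply: perm_rem_at.
apply: (eq_from_nth (x0 := [::])) => // r _.
by case: (eqVneq r r1) => [->|ne]; [exact: row | exact: rowsE].
Qed.


Theorem lemma4p4 (lam mu : seq nat) :
  is_partition lam -> is_partition mu ->
  (forall k, nth 0 mu k <= nth 0 lam k) -> mu != lam ->
  (forall T, inSP lam mu T ->
     [/\ ssyt (iota_sp T), on_Ainf (iota_sp T) & sp_hw (iota_sp T)]) /\
  (forall T1 T2, inSP lam mu T1 -> inSP lam mu T2 ->
     iota_sp T1 = iota_sp T2 -> T1 = T2).
Proof.
move=> _ _ _ _; split.
- by move=> T; apply: part1.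
- by move=> T1 T2; apply: part2.
Qed.
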